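(* Let $a>1$ and $C_j(n,a)=\binom{n}{j}\left(\frac{1+a}{2}\right)^{n-j}\left(\frac{1-a}{2}\right)^j$. Then for every $\lambda\in\mathbb{R}$, $$\lim_{n\to\infty}\sum_{j=0}^nC_j(n,a)e^{\lambda(1-2j/n)-\frac{(1-2j/n)^2}{2}}=e^{-\frac{a^2}{2}+a\lambda}.$$ In particular $\lim_{n\to\infty}\sum_{j=0}^nC_j(n,a)e^{-\frac{(1-2j/n)^2}{2}}=e^{-a^2/2}$ and $\lim_{n\to\infty}\sum_{j=0}^nC_j(n,a)e^{\frac a2(1-2j/n)-\frac{(1-2j/n)^2}{2}}=1$. *)

(* Defs.v *)
From Stdlib Require Import Reals.
From Coquelicot Require Import Coquelicot.
Open Scope R_scope.

Definition Cj (n j : nat) (a : R) : R :=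
  Binomial.C n j * ((1 + a) / 2) ^ (n - j) * ((1 - a) / 2) ^ j.

Definition Ssum (a lam : R) (n : nat) : R :=
  sum_f_R0 (fun j => Cj n j a *
     exp (lam * (1 - 2 * INR j / INR n) - (1 - 2 * INR j / INR n) ^ 2 / 2)) n.

(* Main.v *)
Require Import Defs.
From Stdlib Require Import Reals Lra Lia.
From Coquelicot Require Import Coquelicot.
Open Scope R_scope.

Definition pp (a : R) := (1 + a) / 2.
Definition qq (a : R) := (1 - a) / 2.
Definition T (a : R) (m j : nat) : R :=
  if (j <=? m)%nat then Binomial.C m j * pp a ^ (m - j) * qq a ^ j else 0.

Lemma T_S0 a m : T a (S m) 0 = pp a * T a m 0.
Proof. unfold T; simpl. rewrite !C_n_0, Nat.sub_0_r. ring. Qed.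

Lemma T_SS a m j : T a (S m) (S j) = pp a * T a m (S j) + qq a * T a m j.
Proof.
  unfold T.
  destruct (Nat.lt_trichotomy j m) as [H|[H|H]].
  - assert (E1: (S j <=? S m)%nat = true) by (apply Nat.leb_le; lia).
    assert (E2: (S j <=? m)%nat = true) by (apply Nat.leb_le; lia).
    assert (E3: (j <=? m)%nat = true) by (apply Nat.leb_le; lia).
    rewrite E1, E2, E3. rewrite <- (pascal m j H).
    replace (S m - S j)%nat with (m - j)%nat by lia.
    replace (m - j)%nat with (S (m - S j)) by lia. simpl. ring.
  - subst j.
    assert (E1: (S m <=? S m)%nat = true) by (apply Nat.leb_le; lia).
    assert (E2: (S m <=? m)%nat = false) by (apply Nat.leb_gt; lia).
    assert (E3: (m <=? m)%nat = true) by (apply Nat.leb_le; lia).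
    rewrite E1, E2, E3, !C_n_n, !Nat.sub_diag. simpl. ring.
  - assert (E1: (S j <=? S m)%nat = false) by (apply Nat.leb_gt; lia).
    assert (E2: (S j <=? m)%nat = false) by (apply Nat.leb_gt; lia).
    assert (E3: (j <=? m)%nat = false) by (apply Nat.leb_gt; lia).
    rewrite E1, E2, E3. ring.
Qed.

Lemma T_out a m : T a m (S m) = 0.
Proof. unfold T. assert (E: (S m <=? m)%nat = false) by (apply Nat.leb_gt; lia). now rewrite E. Qed.

Lemma sumT_aux a m (phi : nat -> R) N :
  sum_f_R0 (fun j => T a (S m) j * phi j) (S N) =
  sum_f_R0 (fun j => T a m j * (pp a * phi j + qq a * phi (S j))) N
  + pp a * T a m (S N) * phi (S N).
Proof.
  induction N.
  - simpl. rewrite T_S0, T_SS. ring.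
  - change (sum_f_R0 (fun j => T a (S m) j * phi j) (S (S N))) with
      (sum_f_R0 (fun j => T a (S m) j * phi j) (S N) + T a (S m) (S (S N)) * phi (S (S N))).
    rewrite IHN, T_SS. simpl. ring.
Qed.

Lemma sumT a m (phi : nat -> R) :
  sum_f_R0 (fun j => T a (S m) j * phi j) (S m) =
  sum_f_R0 (fun j => T a m j * (pp a * phi j + qq a * phi (S j))) m.
Proof. rewrite sumT_aux, T_out. ring. Qed.

Lemma T00 a : T a 0 0 = 1.
Proof. unfold T; simpl. rewrite C_n_0. ring. Qed.

Definition Mom a h m k := sum_f_R0 (fun j => T a m j * (h * (INR m - 2 * INR j)) ^ k) m.
Definition ee a h r := pp a * h ^ r + qq a * (- h) ^ r.

Lemma sum_swap (u : nat -> nat -> R) m n :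
  sum_f_R0 (fun i => sum_f_R0 (u i) n) m = sum_f_R0 (fun j => sum_f_R0 (fun i => u i j) m) n.
Proof.
  transitivity (sum_n (fun i => sum_n (u i) n) m).
  { rewrite sum_n_Reals. apply sum_eq; intros. now rewrite sum_n_Reals. }
  rewrite sum_n_switch, sum_n_Reals. apply sum_eq; intros. now rewrite sum_n_Reals.
Qed.

Lemma binom_ee a h y k :
  pp a * (y + h) ^ k + qq a * (y - h) ^ k =
  sum_f_R0 (fun i => Binomial.C k i * y ^ i * ee a h (k - i)) k.
Proof.
  unfold Rminus. rewrite !binomial, !scal_sum, <- sum_plus.
  apply sum_eq; intros. unfold ee. ring.
Qed.

Lemma Mom_S a h m k :
  Mom a h (S m) k = sum_f_R0 (fun i => Binomial.C k i * ee a h (k - i) * Mom a h m i) k.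
Proof.
  unfold Mom.
  rewrite (sumT a m (fun j => (h * (INR (S m) - 2 * INR j)) ^ k)).
  transitivity (sum_f_R0 (fun j => sum_f_R0 (fun i => T a m j *
      (Binomial.C k i * (h * (INR m - 2 * INR j)) ^ i * ee a h (k - i))) k) m).
  { apply sum_eq; intros j _.
    transitivity (T a m j * sum_f_R0 (fun i => Binomial.C k i * (h * (INR m - 2 * INR j)) ^ i * ee a h (k - i)) k).
    2:{ rewrite scal_sum. apply sum_eq; intros; ring. }
    f_equal. rewrite <- binom_ee. rewrite !S_INR. f_equal; f_equal; f_equal; ring. }
  rewrite sum_swap. apply sum_eq; intros i _.
  rewrite scal_sum. apply sum_eq; intros j _. ring.
Qed.

Lemma C_pos n k : 0 <= Binomial.C n k.
Proof.
  unfold Binomial.C. apply Rmult_le_pos. apply pos_INR.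
  left. apply Rinv_0_lt_compat. apply Rmult_lt_0_compat; apply INR_fact_lt_0.
Qed.

Lemma C_Sn_n k : Binomial.C (S k) k = INR (S k).
Proof.
  unfold Binomial.C. replace (S k - k)%nat with 1%nat by lia.
  change (Factorial.fact (S k)) with (S k * Factorial.fact k)%nat.
  rewrite mult_INR. simpl (Factorial.fact 1). simpl (INR 1).
  field. apply INR_fact_neq_0.
Qed.

Lemma ee0 a h : ee a h 0 = 1.
Proof. unfold ee, pp, qq. simpl. field. Qed.
Lemma ee1 a h : ee a h 1 = a * h.
Proof. unfold ee, pp, qq. simpl. field. Qed.

Lemma ee_bounds a h r : 1 <= a -> 0 <= h -> 0 <= ee a h r <= (a * h) ^ r.
Proof.
  intros Ha Hh. unfold ee.
  replace ((- h) ^ r) with ((-1) ^ r * h ^ r) by (rewrite <- Rpow_mult_distr; f_equal; ring).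
  rewrite Rpow_mult_distr.
  assert (0 <= h ^ r) by (apply pow_le; auto).
  destruct (Nat.Even_or_Odd r) as [[n Hn]|[n Hn]]; subst r.
  - rewrite pow_1_even. unfold pp, qq.
    assert (1 <= a ^ (2*n)) by (apply pow_R1_Rle; auto).
    replace ((1 + a) / 2 * h ^ (2 * n) + (1 - a) / 2 * (1 * h ^ (2 * n))) with (h ^ (2*n)) by field.
    split; auto. rewrite <- (Rmult_1_l (h ^ (2*n))) at 1. apply Rmult_le_compat_r; auto.
  - replace (2 * n + 1)%nat with (S (2 * n)) by lia. rewrite pow_1_odd. unfold pp, qq.
    assert (a ^ 1 <= a ^ (S (2*n))) by (apply Rle_pow; auto; lia). simpl in H0.
    replace ((1 + a) / 2 * h ^ S (2 * n) + (1 - a) / 2 * (-1 * h ^ S (2 * n))) with (a * h ^ S (2*n)) by field.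
    assert (0 <= h ^ S (2*n)) by (apply pow_le; auto). split. apply Rmult_le_pos; lra. apply Rmult_le_compat_r; [lra|]. replace (a * 1) with a in H0 by ring. exact H0.
Qed.

Lemma sum_ge_last (f : nat -> R) n : (forall i, 0 <= f i) -> f n <= sum_f_R0 f n.
Proof.
  intros H. destruct n. simpl. lra. simpl. pose proof (cond_pos_sum f n H). lra.
Qed.


Lemma Mom_nonneg a h (Ha : 1 <= a) (Hh : 0 <= h) m k : 0 <= Mom a h m k.
Proof.
  revert k. induction m; intros k.
  - unfold Mom. simpl. rewrite T00. rewrite Rmult_1_l.
    replace (h * (0 - 2 * 0)) with 0 by ring. apply pow_le; lra.
  - rewrite Mom_S. apply cond_pos_sum. intros i.
    pose proof (C_pos k i). pose proof (ee_bounds a h (k - i) Ha Hh). pose proof (IHm i).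
    apply Rmult_le_pos; [apply Rmult_le_pos|]; tauto.
Qed.

Lemma Mom_upper a h (Ha : 1 <= a) (Hh : 0 <= h) m k : Mom a h m k <= (a * h * INR m) ^ k.
Proof.
  revert k. induction m; intros k.
  - unfold Mom. simpl. rewrite T00. rewrite Rmult_1_l.
    replace (h * (0 - 2 * 0)) with 0 by ring. replace (a * h * 0) with 0 by ring. lra.
  - rewrite Mom_S. rewrite S_INR.
    replace (a * h * (INR m + 1)) with (a * h * INR m + a * h) by ring.
    rewrite binomial. apply sum_Rle. intros i Hi.
    pose proof (C_pos k i). pose proof (ee_bounds a h (k - i) Ha Hh). pose proof (IHm i).
    pose proof (Mom_nonneg a h Ha Hh m i).
    rewrite Rmult_assoc, (Rmult_assoc (Binomial.C k i)).
    apply Rmult_le_compat_l; auto. rewrite Rmult_comm.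
    apply Rmult_le_compat; tauto.
Qed.

Fixpoint Pf (k : nat) (x : R) : R :=
  match k with O => 1 | S k' => Pf k' x * (x - INR k') end.

Lemma Pf_S1 k x : Pf (S k) (x + 1) = (x + 1) * Pf k x.
Proof.
  induction k. simpl. ring.
  change (Pf (S (S k)) (x + 1)) with (Pf (S k) (x + 1) * (x + 1 - INR (S k))).
  rewrite IHk. change (Pf (S k) x) with (Pf k x * (x - INR k)). rewrite S_INR. ring.
Qed.

Lemma Pf_S0 k : Pf (S k) 0 = 0.
Proof. induction k. simpl. ring. change (Pf (S (S k)) 0) with (Pf (S k) 0 * (0 - INR (S k))). rewrite IHk; ring. Qed.

Lemma Mom_lower a h (Ha : 1 <= a) (Hh : 0 <= h) m k : (a * h) ^ k * Pf k (INR m) <= Mom a h m k.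
Proof.
  revert k. induction m; intros k.
  - unfold Mom. simpl. rewrite T00. rewrite Rmult_1_l.
    replace (h * (0 - 2 * 0)) with 0 by ring. destruct k.
    + simpl. lra.
    + rewrite Pf_S0. rewrite pow_i by lia. lra.
  - rewrite Mom_S. destruct k.
    + simpl. rewrite ee0. specialize (IHm 0%nat). simpl in IHm. unfold Binomial.C. simpl. lra.
    + assert (Hpos : forall i, 0 <= Binomial.C (S k) i * ee a h (S k - i) * Mom a h m i).
      { intros i. pose proof (C_pos (S k) i). pose proof (ee_bounds a h (S k - i) Ha Hh).
        pose proof (Mom_nonneg a h Ha Hh m i). apply Rmult_le_pos; [apply Rmult_le_pos|]; tauto. }
      change (sum_f_R0 (fun i => Binomial.C (S k) i * ee a h (S k - i) * Mom a h m i) (S k))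
        with (sum_f_R0 (fun i => Binomial.C (S k) i * ee a h (S k - i) * Mom a h m i) k
              + Binomial.C (S k) (S k) * ee a h (S k - S k) * Mom a h m (S k)).
      pose proof (sum_ge_last _ k Hpos) as H. cbv beta in H.
      rewrite C_n_n, Nat.sub_diag, ee0, C_Sn_n in *.
      replace (S k - k)%nat with 1%nat in H by lia. rewrite ee1 in H.
      rewrite S_INR, Pf_S1.
      pose proof (IHm k). pose proof (IHm (S k)).
      simpl Pf in H1. rewrite S_INR in H.
      assert (0 <= (INR k + 1) * (a * h)) by (pose proof (pos_INR k); apply Rmult_le_pos; [lra|apply Rmult_le_pos; lra]).
      assert (((INR k + 1) * (a*h)) * ((a * h) ^ k * Pf k (INR m)) <= ((INR k + 1) * (a*h)) * Mom a h m k)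
        by (apply Rmult_le_compat_l; auto).
      assert (E: a * h * (a * h) ^ k * ((INR m + 1) * Pf k (INR m)) = (INR k + 1) * (a * h) * ((a * h) ^ k * Pf k (INR m)) + (a * h) ^ S k * (Pf k (INR m) * (INR m - INR k))) by (simpl; ring).
      simpl pow. rewrite E. lra.
Qed.

Definition Mn a n k := Mom a (/ INR n) n k.

Lemma inv_nonneg n : 0 <= / INR n.
Proof. destruct n. simpl. rewrite Rinv_0. lra. left. apply Rinv_0_lt_compat. apply lt_0_INR. lia. Qed.

Lemma Mn_bounds a n k : 1 <= a -> 0 <= Mn a n k <= a ^ k.
Proof.
  intros Ha. unfold Mn. split. apply Mom_nonneg; auto using inv_nonneg.
  eapply Rle_trans. apply Mom_upper; auto using inv_nonneg.
  apply pow_incr. destruct n.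
  - simpl. rewrite Rinv_0. lra.
  - rewrite Rmult_assoc, Rinv_l. lra. apply not_0_INR. lia.
Qed.

Lemma inv_n_lim : is_lim_seq (fun n => / INR n) 0.
Proof.
  replace (Finite 0) with (Rbar_inv p_infty) by reflexivity.
  apply is_lim_seq_inv. apply is_lim_seq_INR. discriminate.
Qed.

Lemma Q_lim k : is_lim_seq (fun n => (/ INR n) ^ k * Pf k (INR n)) 1.
Proof.
  induction k.
  - simpl. apply is_lim_seq_ext with (fun _ => 1). intros; ring. apply is_lim_seq_const.
  - apply is_lim_seq_ext_loc with (fun n => ((/ INR n) ^ k * Pf k (INR n)) * (1 - INR k * / INR n)).
    + exists 1%nat. intros n Hn. simpl. field. apply not_0_INR. lia.
    + assert (H: is_lim_seq (fun n => ((/ INR n) ^ k * Pf k (INR n)) * (1 - INR k * / INR n)) (1 * (1 - INR k * 0))).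
      { apply is_lim_seq_mult'; auto. apply is_lim_seq_minus'. apply is_lim_seq_const.
        apply is_lim_seq_scal_l with (lu := Finite 0) (a := INR k). apply inv_n_lim. }
      replace (1 * (1 - INR k * 0)) with 1 in H by ring. exact H.
Qed.

Lemma Mn_lim a k : 1 <= a -> is_lim_seq (fun n => Mn a n k) (a ^ k).
Proof.
  intros Ha.
  apply is_lim_seq_le_le with (u := fun n => a ^ k * ((/ INR n) ^ k * Pf k (INR n))) (w := fun _ => a ^ k).
  - intros n. split.
    + unfold Mn. eapply Rle_trans; [|apply Mom_lower; auto using inv_nonneg].
      rewrite Rpow_mult_distr. right; ring.
    + apply Mn_bounds; auto.
  - replace (Finite (a ^ k)) with (Finite (a ^ k * 1)) by (f_equal; ring).
    apply is_lim_seq_scal_l with (lu := Finite 1). apply Q_lim.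
  - apply is_lim_seq_const.
Qed.

Lemma ex_series_dom (u b : nat -> R) : (forall k, Rabs (u k) <= b k) -> ex_series b -> ex_series u.
Proof. intros H Hb. apply (ex_series_le u b); auto. Qed.

Lemma finsum_lim (u : nat -> nat -> R) N :
  (forall k, is_lim_seq (fun n => u n k) 0) -> is_lim_seq (fun n => sum_f_R0 (u n) N) 0.
Proof.
  intros H. induction N.
  - simpl. apply H.
  - simpl. replace (Finite 0) with (Finite (0 + 0)) by (f_equal; ring).
    apply is_lim_seq_plus'; auto.
Qed.

Lemma tannery (c : nat -> R) (A : nat -> nat -> R) (a : R) :
  (forall n k, 0 <= A n k <= a ^ k) -> (forall k, is_lim_seq (fun n => A n k) (a ^ k)) ->
  ex_series (fun k => Rabs (c k) * a ^ k) ->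
  is_lim_seq (fun n => Series (fun k => c k * A n k)) (Series (fun k => c k * a ^ k)).
Proof.
  intros HA Hlim Hb.
  set (b := fun k => Rabs (c k) * a ^ k) in *.
  assert (Hbnd : forall n k, Rabs (c k * (A n k - a ^ k)) <= b k).
  { intros n k. unfold b. rewrite Rabs_mult. apply Rmult_le_compat_l. apply Rabs_pos.
    specialize (HA n k). rewrite Rabs_left1 by lra. lra. }
  assert (Hex1 : forall n, ex_series (fun k => c k * A n k)).
  { intros n. apply ex_series_dom with b; auto. intros k. unfold b. rewrite Rabs_mult.
    apply Rmult_le_compat_l. apply Rabs_pos. specialize (HA n k). rewrite Rabs_pos_eq; lra. }
  assert (Hex2 : ex_series (fun k => c k * a ^ k)).
  { apply ex_series_dom with b; auto. intros k. unfold b. rewrite Rabs_mult.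
    apply Rmult_le_compat_l. apply Rabs_pos. specialize (HA O k). rewrite Rabs_pos_eq; lra. }
  apply is_lim_seq_Reals. intros eps Heps.
  pose proof (Series_correct _ Hb) as Hsb. apply is_series_Reals in Hsb.
  destruct (Hsb (eps / 3)) as [N0 HN0]; [lra|].
  assert (Htail : Series (fun k => b (S N0 + k)%nat) < eps / 3).
  { pose proof (Series_incr_n b (S N0) ltac:(lia) Hb) as E. simpl pred in E.
    specialize (HN0 N0 ltac:(lia)). unfold R_dist in HN0.
    apply Rabs_def2 in HN0. lra. }
  assert (Hfin : is_lim_seq (fun n => sum_f_R0 (fun k => Rabs (c k * (A n k - a ^ k))) N0) 0).
  { apply finsum_lim. intros k.
    replace (Finite 0) with (Rbar_abs (Finite (c k * (a ^ k - a ^ k)))) by (simpl; f_equal; rewrite Rminus_diag, Rmult_0_r; apply Rabs_R0).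
    apply is_lim_seq_abs. apply is_lim_seq_scal_l with (lu := Finite (a ^ k - a ^ k)).
    apply is_lim_seq_minus'; auto. apply is_lim_seq_const. }
  apply is_lim_seq_Reals in Hfin. destruct (Hfin (eps / 3)) as [N1 HN1]; [lra|].
  exists N1. intros n Hn. specialize (HN1 n Hn). unfold R_dist in *.
  rewrite Rminus_0_r, Rabs_pos_eq in HN1 by (apply cond_pos_sum; intros; apply Rabs_pos).
  rewrite <- Series_minus by auto.
  set (D := fun k => c k * A n k - c k * a ^ k).
  assert (HD : forall k, Rabs (D k) <= b k).
  { intros k. unfold D. rewrite <- Rmult_minus_distr_l. apply Hbnd. }
  assert (HexD : ex_series D) by (apply ex_series_dom with b; auto).
  rewrite (Series_incr_n D (S N0)) by (auto; lia). simpl pred.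
  eapply Rle_lt_trans. apply Rabs_triang.
  assert (H1 : Rabs (sum_f_R0 D N0) <= sum_f_R0 (fun k => Rabs (c k * (A n k - a ^ k))) N0).
  { eapply Rle_trans. apply sum_f_R0_triangle. right. apply sum_eq. intros. unfold D.
    now rewrite <- Rmult_minus_distr_l. }
  assert (H2 : Rabs (Series (fun k => D (S N0 + k)%nat)) <= Series (fun k => b (S N0 + k)%nat)).
  { eapply Rle_trans. apply Series_Rabs.
    apply ex_series_dom with (fun k => b (S N0 + k)%nat). intros; rewrite Rabs_Rabsolu; auto.
    apply (ex_series_incr_n b (S N0)); auto.
    apply Series_le. intros; split; auto. apply Rabs_pos.
    apply (ex_series_incr_n b (S N0)); auto. }
  lra.
Qed.

Lemma is_series_extR (a b : nat -> R) (l : R) : (forall n, a n = b n) -> is_series a l -> is_series b l.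
Proof. apply is_series_ext. Qed.

Lemma exp_ser t : is_series (fun k => t ^ k / INR (Factorial.fact k)) (exp t).
Proof.
  eapply is_series_extR; [|apply (is_exp_Reals t)]. intros k. simpl. rewrite pow_n_pow. reflexivity.
Qed.

Lemma zero_ser : is_series (fun _ : nat => 0) 0.
Proof.
  apply is_series_Reals. intros eps He. exists O. intros n _.
  rewrite sum_cte. unfold R_dist. rewrite Rmult_0_l, Rminus_0_r, Rabs_R0. exact He.
Qed.

Lemma scal_pow (y c : R) n : scal (pow_n y n) c = y ^ n * c.
Proof. rewrite pow_n_pow. reflexivity. Qed.

Definition ev (g : nat -> R) (k : nat) : R := if Nat.even k then g (Nat.div2 k) else 0.

Lemma ev_even g n : ev g (2 * n) = g n.
Proof. unfold ev. rewrite Nat.even_mul. simpl orb. cbv iota. now rewrite Nat.div2_double. Qed.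
Lemma ev_odd g n : ev g (2 * n + 1) = 0.
Proof. unfold ev. rewrite Nat.add_1_r, Nat.even_succ, Nat.odd_mul. simpl. reflexivity. Qed.

Lemma even_ser (g : nat -> R) (x l : R) : is_series (fun n => g n * (x ^ 2) ^ n) l -> is_series (fun k => ev g k * x ^ k) l.
Proof.
  intros H.
  assert (H1 : is_pseries (ev g) x (l + x * 0)).
  { apply is_pseries_odd_even.
    - unfold is_pseries. eapply is_series_extR; [|exact H]. intros n. cbv beta.
      rewrite ev_even, scal_pow. apply Rmult_comm.
    - unfold is_pseries. eapply is_series_extR; [|exact zero_ser]. intros n. cbv beta.
      rewrite ev_odd, scal_pow. cbv beta. rewrite Rmult_0_r. reflexivity. }
  replace (l + x * 0) with l in H1 by ring.
  eapply is_series_extR; [|exact H1]. intros k. cbv beta. rewrite scal_pow. apply Rmult_comm.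
Qed.

Lemma cauchy_ps (al be : nat -> R) x la lb :
  is_series (fun k => al k * x ^ k) la -> is_series (fun k => be k * x ^ k) lb ->
  ex_series (fun k => Rabs (al k * x ^ k)) -> ex_series (fun k => Rabs (be k * x ^ k)) ->
  is_series (fun n => PS_mult al be n * x ^ n) (la * lb).
Proof.
  intros H1 H2 H3 H4. pose proof (is_series_mult _ _ _ _ H1 H2 H3 H4) as H.
  eapply is_series_extR; [|exact H]. intros n. unfold PS_mult.
  rewrite Rmult_comm, scal_sum. apply sum_eq. intros i Hi.
  assert (E : x ^ n = x ^ i * x ^ (n - i)) by (rewrite <- pow_add; f_equal; lia). rewrite E. ring.
Qed.

Definition al (lam : R) k := lam ^ k / INR (Factorial.fact k).
Definition ga k := (- / 2) ^ k / INR (Factorial.fact k).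
Definition gaa k := (/ 2) ^ k / INR (Factorial.fact k).
Definition cc lam := PS_mult (al lam) (ev ga).

Lemma al_ser lam y : is_series (fun k => al lam k * y ^ k) (exp (lam * y)).
Proof.
  eapply is_series_extR; [|apply exp_ser]. intros k. unfold al. rewrite Rpow_mult_distr. field.
  apply INR_fact_neq_0.
Qed.

Lemma al_abs lam y : ex_series (fun k => Rabs (al lam k * y ^ k)).
Proof.
  eexists. eapply is_series_extR; [|apply (exp_ser (Rabs (lam * y)))]. intros k.
  unfold al, Rdiv. rewrite !Rabs_mult, Rabs_inv, (Rabs_pos_eq (INR _)) by apply pos_INR.
  rewrite <- !RPow_abs, Rpow_mult_distr. ring.
Qed.

Lemma be_ser y : is_series (fun k => ev ga k * y ^ k) (exp (- / 2 * y ^ 2)).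
Proof.
  apply even_ser. eapply is_series_extR; [|apply exp_ser]. intros k. unfold ga.
  rewrite Rpow_mult_distr. field. apply INR_fact_neq_0.
Qed.

Lemma be_abs y : ex_series (fun k => Rabs (ev ga k * y ^ k)).
Proof.
  eexists. eapply is_series_extR with (a := fun k => ev gaa k * Rabs y ^ k).
  - intros k. unfold ev. destruct (Nat.even k).
    + unfold ga, gaa, Rdiv. rewrite !Rabs_mult, Rabs_inv, (Rabs_pos_eq (INR _)) by apply pos_INR.
      rewrite <- !RPow_abs. replace (Rabs (- / 2)) with (/ 2). reflexivity.
      rewrite Rabs_Ropp, Rabs_pos_eq; lra.
    + rewrite !Rmult_0_l, Rabs_R0. reflexivity.
  - apply even_ser. eapply is_series_extR; [|apply (exp_ser (/ 2 * (Rabs y) ^ 2))]. intros k. unfold gaa.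
    rewrite Rpow_mult_distr. field. apply INR_fact_neq_0.
Qed.

Lemma cc_ser lam y : is_series (fun k => cc lam k * y ^ k) (exp (lam * y - y ^ 2 / 2)).
Proof.
  replace (lam * y - y ^ 2 / 2) with (lam * y + (- / 2 * y ^ 2)) by field.
  rewrite exp_plus. apply cauchy_ps; auto using al_ser, be_ser, al_abs, be_abs.
Qed.

Lemma cc_abs lam r : 0 <= r -> ex_series (fun k => Rabs (cc lam k) * r ^ k).
Proof.
  intros Hr.
  set (a1 := fun k => Rabs (al lam k)). set (b1 := fun k => Rabs (ev ga k)).
  assert (E1 : forall (f : nat -> R) k, Rabs (f k) * r ^ k = Rabs (f k * r ^ k)).
  { intros f k. rewrite Rabs_mult, (Rabs_pos_eq (r ^ k)) by (apply pow_le; auto). reflexivity. }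
  assert (H : ex_series (fun n => PS_mult a1 b1 n * r ^ n)).
  { destruct (al_abs lam r) as [la Hla]. destruct (be_abs r) as [lb Hlb].
    eexists. apply cauchy_ps.
    - eapply is_series_extR; [|exact Hla]. intros; unfold a1; now rewrite E1.
    - eapply is_series_extR; [|exact Hlb]. intros; unfold b1; now rewrite E1.
    - eapply ex_series_ext; [|exists la; exact Hla]. intros; unfold a1; rewrite !Rabs_mult, Rabs_Rabsolu; reflexivity.
    - eapply ex_series_ext; [|exists lb; exact Hlb]. intros; unfold b1; rewrite !Rabs_mult, Rabs_Rabsolu; reflexivity. }
  apply (ex_series_dom _ (fun n => PS_mult a1 b1 n * r ^ n)); auto.
  intros n.
  rewrite Rabs_mult, Rabs_Rabsolu, (Rabs_pos_eq (r ^ n)) by (apply pow_le; auto).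
  apply Rmult_le_compat_r. apply pow_le; auto.
  unfold cc, PS_mult. eapply Rle_trans. apply sum_f_R0_triangle.
  right. apply sum_eq. intros. unfold a1, b1. apply Rabs_mult.
Qed.

Lemma repr (c : nat -> R) (Fn : R -> R) (w x : nat -> R) N :
  (forall y, is_series (fun k => c k * y ^ k) (Fn y)) ->
  is_series (fun k => c k * sum_f_R0 (fun j => w j * x j ^ k) N) (sum_f_R0 (fun j => w j * Fn (x j)) N).
Proof.
  intros HF. induction N.
  - simpl. pose proof (is_series_scal_l (w O) _ _ (HF (x O))) as H.
    eapply is_series_extR; [|exact H]. intros k. unfold scal; simpl; unfold mult; simpl. ring.
  - simpl. pose proof (is_series_scal_l (w (S N)) _ _ (HF (x (S N)))) as H.
    pose proof (is_series_plus _ _ _ _ IHN H) as H2.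
    eapply is_series_extR; [|exact H2]. intros k. unfold scal, plus; simpl; unfold mult, plus; simpl. ring.
Qed.

Lemma general a (c : nat -> R) (Fn : R -> R) : 1 <= a ->
  (forall y, is_series (fun k => c k * y ^ k) (Fn y)) ->
  ex_series (fun k => Rabs (c k) * a ^ k) ->
  is_lim_seq (fun n => sum_f_R0 (fun j => T a n j * Fn (/ INR n * (INR n - 2 * INR j))) n) (Fn a).
Proof.
  intros Ha HF Hb.
  rewrite <- (is_series_unique _ _ (HF a)).
  eapply is_lim_seq_ext; [|apply (tannery c (Mn a) a); auto].
  - intros n. apply is_series_unique. apply repr. exact HF.
  - intros; apply Mn_bounds; auto.
  - intros; apply Mn_lim; auto.
Qed.

Lemma main_lim a lam : 1 < a -> is_lim_seq (fun n => Ssum a lam n) (exp (- a ^ 2 / 2 + a * lam)).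
Proof.
  intros Ha.
  replace (- a ^ 2 / 2 + a * lam) with (lam * a - a ^ 2 / 2) by (unfold Rdiv; ring).
  eapply is_lim_seq_ext_loc;
    [|apply (general a (cc lam) (fun y => exp (lam * y - y ^ 2 / 2))); [lra|apply cc_ser|apply cc_abs; lra]].
  exists 1%nat. intros n Hn. unfold Ssum. apply sum_eq. intros j Hj.
  unfold T, Cj. assert (E: (j <=? n)%nat = true) by (apply Nat.leb_le; lia). rewrite E.
  unfold pp, qq. f_equal. f_equal.
  assert (INR n <> 0) by (apply not_0_INR; lia).
  replace (/ INR n * (INR n - 2 * INR j)) with (1 - 2 * INR j / INR n) by (field; auto).
  reflexivity.
Qed.

Theorem proposition5p2 (a : R) (ha : 1 < a) :
  (forall lam : R,
     is_lim_seq (fun n => Ssum a lam n) (exp (- a ^ 2 / 2 + a * lam)))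
  /\ is_lim_seq (fun n => Ssum a 0 n) (exp (- a ^ 2 / 2))
  /\ is_lim_seq (fun n => Ssum a (a / 2) n) 1.
Proof.
  split; [|split].
  - intros lam. apply main_lim; auto.
  - replace (- a ^ 2 / 2) with (- a ^ 2 / 2 + a * 0) by ring. apply main_lim; auto.
  - replace 1 with (exp (- a ^ 2 / 2 + a * (a / 2))). apply main_lim; auto.
    replace (- a ^ 2 / 2 + a * (a / 2)) with 0 by field. apply exp_0.
Qed.
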